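(* Let $\mathcal{A}\subset\mathbb{R}^d$ be a finite multiset with $|\mathcal{A}|=(d+1)n+1$, $n\in\mathbb{Z}_{\ge 0}$, and let $l:\mathbb{R}^d\to\mathbb{R}$ be a linear function. Then: (1) if at least $dn+1$ points $\bar{x}$ of $\mathcal{A}$ satisfy $l(\bar{x})\le m$ for some $m\in\mathbb{R}$, then $l(y)\le m$ for every $y\in\varPsi(\mathcal{A},n)$; (2) if at least $dn+1$ points $\bar{x}$ of $\mathcal{A}$ satisfy $l(\bar{x})\ge M$ for some $M\in\mathbb{R}$, then $l(z)\ge M$ for every $z\in\varPsi(\mathcal{A},n)$.
   Context: Cardinality of a multiset counts points with multiplicity. For a finite multiset $\mathcal{A}\subset\mathbb{R}^d$ of cardinality $m'$ and integer $0\le n\le m'$, $\mathcal{S}(\mathcal{A},n)$ is the collection of all sub-multisets of $\mathcal{A}$ of cardinality $m'-n$, and $\varPsi(\mathcal{A},n)=\bigcap_{S\in\mathcal{S}(\mathcal{A},n)}\mathrm{Conv}(S)$, where $\mathrm{Conv}$ denotes convex hull. *)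

(* Defs.v *)
From HB Require Import structures.
From mathcomp Require Import all_boot all_order all_algebra.
From mathcomp Require Import reals.
Set Implicit Arguments. Unset Strict Implicit. Unset Printing Implicit Defensive.
Import Order.TTheory GRing.Theory Num.Theory.
Local Open Scope ring_scope.

(* A finite multiset of cardinality N in R^d is represented by a labelled
   family A : 'I_N -> 'rV[R]_d (labels carry multiplicity).  Sub-multisets of
   cardinality N - n correspond to label sets S : {set 'I_N} with #|S| = N - n. *)

Definition conv_sub (R : realType) (d N : nat) (A : 'I_N -> 'rV[R]_d)
  (S : {set 'I_N}) (x : 'rV[R]_d) : Prop :=
  exists w : 'I_N -> R,
    [/\ forall i, 0 <= w i,
        forall i, i \notin S -> w i = 0,
        \sum_(i < N) w i = 1
      & x = \sum_(i < N) w i *: A i].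

Definition Psi (R : realType) (d N : nat) (A : 'I_N -> 'rV[R]_d) (n : nat)
  (y : 'rV[R]_d) : Prop :=
  forall S : {set 'I_N}, #|S| = (N - n)%N -> conv_sub A S y.

(* Main.v *)
Require Import Defs.
From HB Require Import structures.
From mathcomp Require Import all_boot all_order all_algebra.
From mathcomp Require Import reals.
Import Order.TTheory GRing.Theory Num.Theory.
Local Open Scope ring_scope.

Lemma sub_card (T : finType) (B : {set T}) k : (k <= #|B|)%N ->
  exists S : {set T}, S \subset B /\ #|S| = k.
Proof.
move=> hk; exists [set x in take k (enum B)]; split.
  apply/subsetP=> x; rewrite inE => /mem_take; by rewrite mem_enum.
rewrite cardsE; move/card_uniqP: (take_uniq k (enum_uniq (mem B))) => ->.
by rewrite size_takel // -cardE.
Qed.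

Lemma conv_bound (R : realType) (d N : nat) (A : 'I_N -> 'rV[R]_d)
  (l : {linear 'rV[R]_d -> R^o}) (S : {set 'I_N}) y (P : R -> R -> bool) m :
  (forall a b c, 0 <= c -> P a b -> P (c * a) (c * b)) ->
  P 0 0 -> (forall a b c e, P a b -> P c e -> P (a + c) (b + e)) ->
  (forall i, i \in S -> P (l (A i)) m) ->
  conv_sub A S y -> P (l y) m.
Proof.
move=> hM h0 hD hS [w [w0 wS w1 ->]].
rewrite linear_sum /=.
have -> : m = \sum_(i < N) w i * m by rewrite -big_distrl /= w1 mul1r.
apply: (big_ind2 P) => // i _.
rewrite linearZ /=.
case: (boolP (i \in S)) => iS.
  by apply: hM; [exact: w0 | exact: hS].
by rewrite (wS i iS) scale0r mul0r.
Qed.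

Theorem lemma4 (R : realType) (d n : nat)
  (A : 'I_((d.+1 * n).+1) -> 'rV[R]_d) (l : {linear 'rV[R]_d -> R^o}) :
  (forall m : R, ((d * n).+1 <= #|[set i | (l (A i) <= m)%R]|)%N ->
     forall y, Psi A n y -> l y <= m) /\
  (forall M : R, ((d * n).+1 <= #|[set i | (M <= l (A i))%R]|)%N ->
     forall z, Psi A n z -> M <= l z).
Proof.
have hN : ((d.+1 * n).+1 - n)%N = (d * n).+1.
  by rewrite mulSn -addnS addKn.
split.
  move=> m /sub_card [S [sS cS]] y /(_ S) hy.
  have := hy (etrans cS (esym hN)).
  apply: (@conv_bound R d _ A l S y (fun a b => a <= b) m).
  - by move=> a b c c0 ab; rewrite ler_wpM2l.
  - by [].
  - by move=> a b c e; apply: lerD.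
  - by move=> i /(subsetP sS); rewrite inE.
move=> M /sub_card [S [sS cS]] y /(_ S) hy.
have := hy (etrans cS (esym hN)).
apply: (@conv_bound R d _ A l S y (fun a b => b <= a) M).
- by move=> a b c c0 ab; rewrite ler_wpM2l.
- by [].
- by move=> a b c e; apply: lerD.
- by move=> i /(subsetP sS); rewrite inE.
Qed.
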